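(* Let $\epsilon'$ be obtained from $\epsilon$ by removing the entry $\epsilon_i$ (if $n=4$, assume $\epsilon'$ homogeneous), and let $\mathcal V'=\mathfrak{tr}^\epsilon_{\epsilon'}(\mathcal V)$. Then (1) $\mathcal V'$ is stable under the action of $\mathring{\mathcal U}(\epsilon')$ via $\phi$ and is isomorphic to the natural representation of $\mathring{\mathcal U}(\epsilon')$; (2) $\mathfrak{tr}^\epsilon_{\epsilon'}(\mathcal V^{\otimes\ell})$ is isomorphic to $\mathcal V'^{\otimes\ell}$ as a $\mathring{\mathcal U}(\epsilon')$-module, for every $\ell\ge1$.
   Context: Fix $n\ge 4$, $\epsilon\in\{0,1\}^n$. For $\epsilon^\ast\in\{0,1\}^k$: $\mathbb I=\{1,\dots,k\}$, $\alpha_i=\delta_i-\delta_{i+1}$, $\langle\alpha_i,\delta_j^\vee\rangle$ the coefficient of $\delta_j$ in $\alpha_i$, $I_{\rm even}=\{i:\epsilon^\ast_i=\epsilon^\ast_{i+1}\}$, $I_{\rm odd}$ its complement, $[2]=q+q^{-1}$, $q_j=q$ if $\epsilon^\ast_j=0$, $q_j=-q^{-1}$ if $\epsilon^\ast_j=1$. $\mathring{\mathcal U}(\epsilon^\ast)$ is generated over $\mathbb Q(q)$ by pairwise commuting invertible $\omega_j$ ($j\in\mathbb I$) and $e_i,f_i$ ($1\le i\le k-1$) with relations $\omega_je_i\omega_j^{-1}=q_j^{\langle\alpha_i,\delta_j^\vee\rangle}e_i$, $\omega_jf_i\omega_j^{-1}=q_j^{-\langle\alpha_i,\delta_j^\vee\rangle}f_i$,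 $e_if_j-f_je_i=\delta_{ij}(k_i-k_i^{-1})/(q-q^{-1})$, $k_i=\omega_i\omega_{i+1}^{-1}$, $e_i^2=f_i^2=0$ ($i\in I_{\rm odd}$) and Serre-type relations ($e_ie_j=e_je_i$ for $|i-j|>1$; $e_i^2e_j-(-1)^{\epsilon^\ast_i}[2]e_ie_je_i+e_je_i^2=0$ for $i\in I_{\rm even}$, $|i-j|=1$; $e_ie_{i-1}e_ie_{i+1}-e_ie_{i+1}e_ie_{i-1}+e_{i+1}e_ie_{i-1}e_i-e_{i-1}e_ie_{i+1}e_i+(-1)^{\epsilon^\ast_i}[2]e_ie_{i-1}e_{i+1}e_i=0$ for $i\in I_{\rm odd}$; same for $f$). Tensor products use $\Delta(\omega_j)=\omega_j\otimes\omega_j$, $\Delta(e_i)=e_i\otimes1+k_i^{-1}\otimes e_i$, $\Delta(f_i)=f_i\otimes k_i+1\otimes f_i$. The natural representation $\mathcal V$ of $\mathring{\mathcal U}(\epsilon^\ast)$ is $\bigoplus_{j\in\mathbb I}\mathbb Q(q)v_j$ with $\omega_iv_j=q_i^{\delta_{ij}}v_j$, $e_kv_j=\delta_{k,j-1}v_{j-1}$, $f_kv_j=\delta_{kj}v_{j+1}$. Action via $\phi$: $\mathring{\mathcal U}(\epsilon')$ (generators $\omega'_l$, $1\le l\le n-1$, and $e'_j,f'_j$, $1\le j\le n-2$) acts on $\mathring{\mathcal U}(\epsilon)$-modules through $\omega'_l\mapsto\omega_l$ ($l<i$), $\omega_{l+1}$ ($l\ge i$), $e'_j\mapsto E_j$,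 $f'_j\mapsto F_j$ where: if $2\le i\le n-1$, $E_j=e_j,F_j=f_j$ ($j\le i-2$), $E_{i-1}=e_{i-1}e_i-D\,e_ie_{i-1}$, $F_{i-1}=f_if_{i-1}-D^{-1}f_{i-1}f_i$ with $D=q_{i-1}^{\langle\alpha_i,\delta_{i-1}^\vee\rangle}q_i^{-\langle\alpha_i,\delta_i^\vee\rangle}$, and $E_j=e_{j+1},F_j=f_{j+1}$ ($j\ge i$); if $i=n$, $E_j=e_j,F_j=f_j$; if $i=1$, $E_j=e_{j+1},F_j=f_{j+1}$. Truncation: for a $\mathring{\mathcal U}(\epsilon)$-submodule $V$ of a tensor power of $\mathcal V$, with weight spaces $V_\mu=\{u:\omega_ju=q_j^{\mu_j}u\}$, $\mu=\sum\mu_j\delta_j$, $\mathfrak{tr}^\epsilon_{\epsilon'}(V)=\bigoplus_{\mu:\ \mu_i=0}V_\mu$ (where $i$ is the removed position). *)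

(* Defs.v *)
From HB Require Import structures.
From mathcomp Require Import all_boot all_order all_algebra.


Unset Printing Implicit Defensive.
Import Order.TTheory GRing.Theory Num.Theory.
Local Open Scope ring_scope.

(* Paper indices (positions j, generator indices i) are
   1-based naturals; a basis index m : 'I_k stands for v_(m+1). *)

Definition F : fieldType := {fraction {poly rat}}.
Definition q : F := tofrac 'X.

Definition qj (eps : seq bool) (j : nat) : F :=
  if nth false eps j.-1 then - q^-1 else q.

(* <alpha_i, delta_j^vee> = coefficient of delta_j in alpha_i = delta_i - delta_(i+1). *)
Definition pairing (i j : nat) : int := (j == i)%:Z - (j == i.+1)%:Z.

Definition omega1 (eps : seq bool) (j : nat) (m : 'I_(size eps)) : F :=
  if m.+1 == j then qj eps j else 1.
Definition k1 (eps : seq bool) (i : nat) (m : 'I_(size eps)) : F :=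
  omega1 eps i m / omega1 eps i.+1 m.

Definition ordpred {k} (m : 'I_k) : 'I_k :=
  Ordinal (leq_ltn_trans (leq_pred m) (ltn_ord m)).
Definition ordsucc {k} (m : 'I_k) : 'I_k := insubd m m.+1.

(* e_i v_j = delta_{i,j-1} v_(j-1), with j = m+1 *)
Definition e1 (eps : seq bool) (i : nat) (m : 'I_(size eps)) : option 'I_(size eps) :=
  if i == (m.+1 - 1)%N then Some (ordpred m) else None.
(* f_i v_j = delta_{i,j} v_(j+1), with j = m+1 *)
Definition f1 (eps : seq bool) (i : nat) (m : 'I_(size eps)) : option 'I_(size eps) :=
  if i == m.+1 then Some (ordsucc m) else None.

Record act (T : Type) : Type := Act {
  om : nat -> T -> T;
  ea : nat -> T -> T;
  fa : nat -> T -> T }.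
Arguments Act {T}.
Arguments om {T}.
Arguments ea {T}.
Arguments fa {T}.

Definition natv (k : nat) : lmodType F := {ffun 'I_k -> F^o}.
Definition bN {k} (m : 'I_k) : natv k := [ffun m' => (m' == m)%:R].
Definition actN {k} (g : 'I_k -> natv k) (u : natv k) : natv k :=
  \sum_m u m *: g m.
Definition natrep (eps : seq bool) : act (natv (size eps)) :=
  {| om := fun j => actN (fun m => omega1 eps j m *: bN m);
     ea := fun i => actN (fun m => if e1 eps i m is Some m' then bN m' else 0);
     fa := fun i => actN (fun m => if f1 eps i m is Some m' then bN m' else 0) |}.

(* ---- the tensor power V^{(x) l}, basis v_(J 0) (x) ... (x) v_(J (l-1)),
   with the action given by the iterated coproduct
   Delta(omega_j) = omega_j (x) omega_j,
   Delta(e_i) = e_i (x) 1 + k_i^-1 (x) e_i,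
   Delta(f_i) = f_i (x) k_i + 1 (x) f_i. ---- *)
Definition tidx (k l : nat) := {ffun 'I_l -> 'I_k}.
Definition tens (k l : nat) : lmodType F := {ffun tidx k l -> F^o}.
Definition bT {k l} (J : tidx k l) : tens k l := [ffun J' => (J' == J)%:R].
Definition actT {k l} (g : tidx k l -> tens k l) (u : tens k l) : tens k l :=
  \sum_J u J *: g J.
Definition upd {k l} (J : tidx k l) (p : 'I_l) (m : 'I_k) : tidx k l :=
  [ffun r => if r == p then m else J r].

Definition tensrep (eps : seq bool) (l : nat) : act (tens (size eps) l) :=
  {| om := fun j => actT (fun J => (\prod_p omega1 eps j (J p)) *: bT J);
     ea := fun i => actT (fun J => \sum_(p : 'I_l)
              (\prod_(r : 'I_l | (r < p)%N) k1 eps i (J r))^-1 *: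
              (if e1 eps i (J p) is Some m then bT (upd J p m) else 0));
     fa := fun i => actT (fun J => \sum_(p : 'I_l)
              (\prod_(r : 'I_l | (p < r)%N) k1 eps i (J r)) *:
              (if f1 eps i (J p) is Some m then bT (upd J p m) else 0)) |}.

(* ---- the map phi: action of U(eps') (eps' = eps with entry i removed)
   on a U(eps)-module with generator action A ---- *)
Definition Dcoef (eps : seq bool) (i : nat) : F :=
  qj eps i.-1 ^ pairing i i.-1 * qj eps i ^ (- pairing i i).

Definition phiact (eps : seq bool) (i : nat) {T : lmodType F} (A : act T) : act T :=
  let n := size eps in
  let D := Dcoef eps i in
  {| om := fun l => if (l < i)%N then om A l else om A l.+1;
     ea := fun j =>
       if (2 <= i <= n.-1)%N then
         (if (j <= i.-2)%N then ea A j
          else if j == i.-1 then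
            (fun u => ea A i.-1 (ea A i u) - D *: ea A i (ea A i.-1 u))
          else ea A j.+1)
       else if i == n then ea A j else ea A j.+1;
     fa := fun j =>
       if (2 <= i <= n.-1)%N then
         (if (j <= i.-2)%N then fa A j
          else if j == i.-1 then
            (fun u => fa A i (fa A i.-1 u) - D^-1 *: fa A i.-1 (fa A i u))
          else fa A j.+1)
       else if i == n then fa A j else fa A j.+1 |}.

(* u in V_mu, mu = sum_j mu_j delta_j (mu given on basis indices m <-> j = m+1) *)
Definition weightvec (eps : seq bool) {T : lmodType F} (A : act T)
  (mu : {ffun 'I_(size eps) -> int}) (u : T) : Prop :=
  forall m : 'I_(size eps), om A m.+1 u = (qj eps m.+1 ^ mu m) *: u.

Definition inTr (eps : seq bool) (i : nat) {T : lmodType F} (A : act T) (u : T) : Prop :=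
  exists (N : nat) (mu : 'I_N -> {ffun 'I_(size eps) -> int}) (w : 'I_N -> T),
    (forall t, weightvec eps A (mu t) (w t) /\
               forall m : 'I_(size eps), m.+1 = i -> mu t m = 0) /\
    u = \sum_t w t.

Definition stable (k' : nat) {T : lmodType F} (A : act T) (P : T -> Prop) : Prop :=
  forall u, P u ->
    (forall l, (1 <= l <= k')%N -> P (om A l u)) /\
    (forall j, (1 <= j <= k'.-1)%N -> P (ea A j u) /\ P (fa A j u)).

Definition iso_to (k' : nat) {T' T : lmodType F} (A' : act T') (A : act T)
  (P : T -> Prop) : Prop :=
  exists g : {linear T' -> T},
    injective g /\ (forall v, P (g v)) /\ (forall u, P u -> exists v, g v = u) /\
    (forall l, (1 <= l <= k')%N -> forall v, g (om A' l v) = om A l (g v)) /\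
    (forall j, (1 <= j <= k'.-1)%N -> forall v,
        g (ea A' j v) = ea A j (g v) /\ g (fa A' j v) = fa A j (g v)).

(* Main.v *)
From HB Require Import structures.
Require Import Defs.
From mathcomp Require Import all_boot all_order all_algebra.
Import GRing.Theory.
Local Open Scope ring_scope.

Lemma regZ (a : F) (b : F^o) : a *: b = a * (b : F). Proof. by []. Qed.

Definition S (X : finType) : lmodType F := {ffun X -> F^o}.
Section Gen.
Context {X : finType}.
Local Notation S := (S X).
Definition bb (x : X) : S := [ffun x' => (x' == x)%:R].
Definition actG (g : X -> S) (u : S) : S := \sum_x u x *: g x.
Definition lin (T : S -> S) := forall a u v, T (a *: u + v) = a *: T u + T v.

Lemma expand (u : S) : u = \sum_x u x *: bb x.
Proof.
apply/ffunP => y; rewrite sum_ffunE (bigD1 y) //= big1 ?addr0.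
  by rewrite !ffunE regZ eqxx mulr1.
by move=> x /negbTE nx; rewrite !ffunE regZ eq_sym nx mulr0.
Qed.

Lemma bbE x y : bb x y = (y == x)%:R.
Proof. by rewrite ffunE. Qed.

Lemma lin0 T : lin T -> T 0 = 0.
Proof.
move=> L; have := L 1 0 0; rewrite !scale1r addr0 => E.
by apply: (@addrI _ (T 0)); rewrite -E addr0.
Qed.

Lemma linZ T : lin T -> forall a u, T (a *: u) = a *: T u.
Proof. by move=> L a u; have := L a u 0; rewrite !addr0 lin0 // addr0. Qed.

Lemma linD T : lin T -> forall u v, T (u + v) = T u + T v.
Proof. by move=> L u v; have := L 1 u v; rewrite !scale1r. Qed.

Lemma lin_sum T (I : finType) (c : I -> F) (w : I -> S) : lin T ->
  T (\sum_p c p *: w p) = \sum_p c p *: T (w p).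
Proof.
move=> L; elim/big_rec2: _ => [|p y1 y2 _ <-]; first exact: lin0.
by rewrite L.
Qed.

Lemma lin_sum1 T (I : finType) (w : I -> S) : lin T ->
  T (\sum_p w p) = \sum_p T (w p).
Proof.
move=> L; elim/big_rec2: _ => [|p y1 y2 _ <-]; first exact: lin0.
by rewrite linD.
Qed.

Lemma lin_expand T u : lin T -> T u = \sum_x u x *: T (bb x).
Proof. by move=> L; rewrite {1}(expand u) lin_sum. Qed.

Lemma lin_actG g : lin (actG g).
Proof.
move=> a u v; rewrite /actG scaler_sumr -big_split; apply: eq_bigr => x _.
by rewrite !ffunE !regZ scalerDl scalerA.
Qed.

Lemma actG_bb g x : actG g (bb x) = g x.
Proof.
rewrite /actG (bigD1 x) //= big1 ?addr0; first by rewrite bbE eqxx scale1r.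
by move=> y /negbTE ny; rewrite bbE ny scale0r.
Qed.

Lemma lin_comp T1 T2 : lin T1 -> lin T2 -> lin (fun u => T1 (T2 u)).
Proof. by move=> L1 L2 a u v; rewrite L2 L1. Qed.

Lemma lin_comb T1 T2 (D : F) : lin T1 -> lin T2 -> lin (fun u => T1 u - D *: T2 u).
Proof.
move=> L1 L2 a u v; rewrite L1 L2 scalerDr scalerA mulrC -scalerA.
by rewrite opprD addrACA scalerBr.
Qed.

End Gen.


Section Map.
Variables (X X' : finType) (sg : X' -> X).
Definition gm (v : S X') : S X := \sum_x' v x' *: bb (sg x').

Lemma gm_linear : linear gm.
Proof. 
move=> a u v; rewrite /gm scaler_sumr -big_split; apply: eq_bigr => x _.
by rewrite !ffunE !regZ scalerDl scalerA.
Qed.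

HB.instance Definition _ := GRing.isLinear.Build F (S X') (S X) *:%R gm gm_linear.

Lemma gm_bb x' : gm (bb x') = bb (sg x').
Proof.
rewrite /gm (bigD1 x') //= big1 ?addr0; first by rewrite bbE eqxx scale1r.
by move=> y /negbTE ny; rewrite bbE ny scale0r.
Qed.

Hypothesis sg_inj : injective sg.

Lemma gmE v x' : gm v (sg x') = v x'.
Proof.
rewrite /gm sum_ffunE (bigD1 x') //= big1 ?addr0.
  by rewrite !ffunE regZ eqxx mulr1.
by move=> y ny; rewrite !ffunE regZ (inj_eq sg_inj) eq_sym (negbTE ny) mulr0.
Qed.

Lemma gm_inj : injective gm.
Proof. by move=> u v E; apply/ffunP => x; rewrite -!gmE E. Qed.

Lemma gm_out v x : (forall x', sg x' != x) -> gm v x = 0.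
Proof.
move=> H; rewrite /gm sum_ffunE big1 // => y _.
by rewrite !ffunE regZ eq_sym (negbTE (H y)) mulr0.
Qed.

Lemma intertw (T : S X -> S X) (T' : S X' -> S X') : lin T -> lin T' ->
  (forall x', T (bb (sg x')) = gm (T' (bb x'))) -> forall v, T (gm v) = gm (T' v).
Proof.
move=> L L' H v; rewrite [in RHS](lin_expand _ v L') linear_sum /gm lin_sum //.
apply: eq_bigr => x' _; rewrite H linearZ //.
Qed.
End Map.
Arguments gm {X X'} sg v.
Arguments gmE {X X' sg} sg_inj v x'.
Arguments gm_inj {X X' sg} sg_inj [x1 x2].
Arguments gm_out {X X' sg} v x.
Arguments gm_bb {X X'} sg x'.
Arguments intertw {X X'} sg [T T'].

Lemma q_pow n : q ^+ n = 1 -> n = 0%N.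
Proof.
rewrite /q -tofracXn -tofrac1 => /eqP; rewrite tofrac_eq => /eqP E.
by have := size_polyXn rat n; rewrite E size_poly1 => -[].
Qed.

Lemma qj_pow eps j n : qj eps j ^+ n = 1 -> n = 0%N.
Proof.
rewrite /qj; case: ifP => _; last exact: q_pow.
move=> E; have : ((- q^-1) ^+ n) ^+ 2 = 1 by rewrite E expr1n.
rewrite -exprM mulnC exprM sqrrN -exprM exprVn => /eqP; rewrite invr_eq1 => /eqP.
by move/q_pow => /eqP; rewrite muln_eq0 => /eqP.
Qed.

Lemma q_neq0 : q != 0.
Proof. by rewrite /q tofrac_eq0 polyX_eq0. Qed.

Lemma qj_neq0 eps j : qj eps j != 0.
Proof. by rewrite /qj; case: ifP => _; rewrite ?oppr_eq0 ?invr_eq0 q_neq0. Qed.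

Lemma sum_bb {X : finType} (a : X -> F) x : (\sum_y a y *: bb y : S X) x = a x.
Proof.
rewrite sum_ffunE (bigD1 x) //= big1 ?addr0; first by rewrite !ffunE regZ eqxx mulr1.
by move=> y /negbTE ny; rewrite !ffunE regZ eq_sym ny mulr0.
Qed.

Section Tr.
Context {X X' : finType} (sg : X' -> X) (sg_inj : injective sg) (eps : seq bool)
  (i : nat) (A : act (S X)) (cnt : nat -> X -> nat).
Hypothesis Hi : (1 <= i <= size eps)%N.
Hypothesis Lom : forall j, lin (om A j).
Hypothesis Hom : forall j x, om A j (bb x) = qj eps j ^+ cnt j x *: bb x.
Hypothesis H1 : forall x', cnt i (sg x') = 0%N.
Hypothesis H2 : forall x, cnt i x = 0%N -> exists x', sg x' = x.

Lemma inTr_gm v : inTr eps i A (gm sg v).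
Proof.
exists #|X'|, (fun t => [ffun m : 'I_(size eps) => (cnt m.+1 (sg (enum_val t)))%:Z]),
  (fun t => v (enum_val t) *: bb (sg (enum_val t))).
split.
  move=> t; split.
    move=> m; rewrite linZ // Hom ffunE scalerA mulrC -scalerA -exprnP //.
  by move=> m Hm; rewrite ffunE Hm H1.
rewrite /gm; have := big_enum_val (A := predT) (fun x => v x *: bb (sg x)). simpl. by move=> <-.
Qed.

Lemma inTr_surj u : inTr eps i A u -> exists v, gm sg v = u.
Proof.
move=> [N [mu [w [Hw ->]]]].
exists [ffun x' => (\sum_t w t) (sg x')]; apply/ffunP => x.
case: (pickP (fun x' => sg x' == x)) => [x' /eqP <-| none].
  by rewrite gmE // ffunE.
rewrite gm_out; last by move=> x'; rewrite none.
have cx : cnt i x != 0%N.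
  by apply/eqP => /H2 [x' E]; have := none x'; rewrite E eqxx.
rewrite sum_ffunE big1 // => t _.
have [Hwt Hmu] := Hw t.
have ilt : (i.-1 < size eps)%N by case/andP: Hi => i1 i2; rewrite prednK.
have Ei : (Ordinal ilt).+1 = i by case/andP: Hi => i1 _; rewrite /= prednK.
have := Hwt (Ordinal ilt); rewrite Ei Hmu // expr0z scale1r.
rewrite (lin_expand _ (w t) (Lom i)).
under eq_bigr => y _ do rewrite Hom scalerA.
move/(congr1 (fun f : S X => f x)); rewrite sum_bb.
move/eqP; rewrite -subr_eq0 -{2}(mulr1 (w t x)) -mulrBr mulf_eq0 subr_eq0.
case/orP => [/eqP //|/eqP/qj_pow E]; by rewrite E eqxx in cx.
Qed.
End Tr.
From mathcomp Require Import zify.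
Section Idx.
Variables (eps : seq bool) (i : nat).
Hypothesis Hn : (4 <= size eps)%N.
Hypothesis Hi : (1 <= i <= size eps)%N.
Local Notation eps' := (take i.-1 eps ++ drop i eps).

Lemma size_eps' : size eps' = (size eps).-1.
Proof. rewrite size_cat size_take size_drop; case: ifP; lia. Qed.

Definition snat (a : nat) := if (a.+1 < i)%N then a else a.+1.
Lemma s_lt (a : 'I_(size eps')) : (snat a < size eps)%N.
Proof. have := ltn_ord a; have := size_eps'; rewrite /snat; case: ifP; lia. Qed.
Definition s (a : 'I_(size eps')) : 'I_(size eps) := Ordinal (s_lt a).

Lemma s_inj : injective s.
Proof. move=> a b /(congr1 val) /=; rewrite /snat => E; apply/val_inj => /=; move: E; do 2 case: ifP; lia. Qed.

Lemma s_surj (m : 'I_(size eps)) : m.+1 != i -> exists a, s a = m.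
Proof.
move=> mi.
have lt : ((if (m.+1 < i)%N then m : nat else m.-1) < size eps')%N.
  have := size_eps'; have := ltn_ord m; case: ifP; lia.
exists (Ordinal lt); apply/val_inj; rewrite /= /snat; case: ifP; case: ifP; lia.
Qed.

Definition lsh (l : nat) := if (l < i)%N then l else l.+1.

Lemma qj_s l : (1 <= l)%N -> qj eps' l = qj eps (lsh l).
Proof.
move=> l1; rewrite /qj.
suff -> : nth false eps' l.-1 = nth false eps (lsh l).-1 by [].
rewrite nth_cat size_take.
have -> : (if (i.-1 < size eps)%N then i.-1 else size eps) = i.-1 by case: ifP; lia.
rewrite /lsh; case: (ltnP l i) => li.
  rewrite (_ : (l.-1 < i.-1)%N = true) ?nth_take //; lia.
rewrite (_ : (l.-1 < i.-1)%N = false); last lia.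
rewrite nth_drop; congr nth; lia.
Qed.

Lemma omega1_s l (a : 'I_(size eps')) : omega1 eps' l a = omega1 eps (lsh l) (s a).
Proof.
rewrite /omega1 /= /snat /lsh.
case: (ltnP 0 l) => l0; last first.
  have -> : l = 0%N by lia.
  have i0 : (0 < i)%N by lia.
  by rewrite i0; case: ifP.
rewrite qj_s //.
have -> : (a.+1 == l) = ((snat a).+1 == lsh l).
  rewrite /snat /lsh; case: ifP => ai; case: ifP => li;
  by apply/idP/idP => /eqP H; apply/eqP; lia.
by [].
Qed.
End Idx.
Section Idx2.
Variables (eps : seq bool) (i : nat).
Hypothesis Hn : (4 <= size eps)%N.
Hypothesis Hi : (1 <= i <= size eps)%N.
Local Notation eps' := (take i.-1 eps ++ drop i eps).
Local Notation s := (s eps i Hn Hi).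
Let Hk := size_eps' eps i Hn Hi.

Lemma ordpredE k (m : 'I_k) : (ordpred m : nat) = m.-1. Proof. by []. Qed.
Lemma ordsuccE k (m : 'I_k) : (ordsucc m : nat) = if (m.+1 < k)%N then m.+1 else m.
Proof. by rewrite /ordsucc val_insubd. Qed.
Lemma sE a : (s a : nat) = snat i a. Proof. by []. Qed.

Ltac splitifs := repeat match goal with
 | |- context [if ?c then _ else _] => destruct c eqn:?
 | H : context [if ?c then _ else _] |- _ => destruct c eqn:?
 end.
Ltac bl := rewrite ?(sE, ordpredE, ordsuccE) /snat /lsh; splitifs;
  try (apply/idP/idP => /eqP ?; apply/eqP); lia.

Lemma e1_s j a : j.+1 != i -> e1 eps (lsh i j) (s a) = omap s (e1 eps' j a).
Proof.
move=> ji; rewrite /e1.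
have -> : (lsh i j == (s a).+1 - 1)%N = (j == a.+1 - 1)%N by bl.
case: ifP => // /eqP H; congr Some; apply/val_inj => /=; move: H; bl.
Qed.

Lemma f1_s j a : j.+1 != i -> (j < size eps')%N -> f1 eps (lsh i j) (s a) = omap s (f1 eps' j a).
Proof.
move=> ji jk; rewrite /f1.
have -> : (lsh i j == (s a).+1)%N = (j == a.+1)%N by bl.
case: ifP => // /eqP H; congr Some; apply/val_inj => /=; move: H jk (ltn_ord a) Hk; bl.
Qed.

Lemma omega1_neq0 e l (m : 'I_(size e)) : omega1 e l m != 0.
Proof. by rewrite /omega1; case: ifP => _; rewrite ?oner_eq0 ?qj_neq0. Qed.

Lemma k1_s j a : j.+1 != i -> k1 eps' j a = k1 eps (lsh i j) (s a).
Proof.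
move=> ji; rewrite /k1 !omega1_s; congr (_ / omega1 _ _ _).
rewrite /lsh; case: ifP; case: ifP; lia.
Qed.

Hypothesis Hmid : (2 <= i <= (size eps).-1)%N.

Lemma k1_s_mid a : k1 eps' i.-1 a = k1 eps i (s a) * k1 eps i.-1 (s a).
Proof.
rewrite /k1 !omega1_s.
have -> : lsh i i.-1 = i.-1 by rewrite /lsh; case: ifP; lia.
have -> : lsh i i.-1.+1 = i.+1 by rewrite /lsh; case: ifP; lia.
have -> : i.-1.+1 = i by lia.
by rewrite [RHS]mulrC mulrA divfK ?omega1_neq0.
Qed.

Lemma L1 a : e1 eps i.-1 (s a) = None.
Proof. rewrite /e1; have -> : (i.-1 == (s a).+1 - 1)%N = false by bl. by []. Qed.

Lemma L2 (a : 'I_(size eps')) : (a : nat) != i.-1 -> e1 eps i (s a) = None /\ e1 eps' i.-1 a = None.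
Proof.
move=> ai; rewrite /e1; have -> : (i == (s a).+1 - 1)%N = false by move: ai; bl.
by have -> : (i.-1 == a.+1 - 1)%N = false by move: ai; bl.
Qed.

Lemma L3 (a : 'I_(size eps')) : (a : nat) = i.-1 -> 
  [/\ e1 eps i (s a) = Some (ordpred (s a)), e1 eps' i.-1 a = Some (ordpred a)
    & e1 eps i.-1 (ordpred (s a)) = Some (s (ordpred a))].
Proof.
move=> ai; rewrite /e1.
have -> : (i == (s a).+1 - 1)%N = true by move: ai; bl.
have -> : (i.-1 == a.+1 - 1)%N = true by move: ai; bl.
have -> : (i.-1 == (ordpred (s a)).+1 - 1)%N = true by move: ai; bl.
split => //; congr Some; apply/val_inj => /=; move: ai; bl.
Qed.

Lemma F1 a : f1 eps i (s a) = None.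
Proof. rewrite /f1; have -> : (i == (s a).+1)%N = false by bl. by []. Qed.

Lemma F2 (a : 'I_(size eps')) : (a : nat) != i.-2 -> f1 eps i.-1 (s a) = None /\ f1 eps' i.-1 a = None.
Proof.
move=> ai; rewrite /f1; have -> : (i.-1 == (s a).+1)%N = false by move: ai; bl.
by have -> : (i.-1 == a.+1)%N = false by move: ai; bl.
Qed.

Lemma F3 (a : 'I_(size eps')) : (a : nat) = i.-2 -> 
  [/\ f1 eps i.-1 (s a) = Some (ordsucc (s a)), f1 eps' i.-1 a = Some (ordsucc a)
    & f1 eps i (ordsucc (s a)) = Some (s (ordsucc a))].
Proof.
move=> ai; rewrite /f1.
have -> : (i.-1 == (s a).+1)%N = true by move: ai; bl.
have -> : (i.-1 == a.+1)%N = true by move: ai; bl.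
have -> : (i == (ordsucc (s a)).+1)%N = true by move: ai Hk (ltn_ord a); bl.
split => //; congr Some; apply/val_inj => /=; move: ai Hk (ltn_ord a); bl.
Qed.
End Idx2.
Definition linact {X : finType} (A : act (S X)) :=
  forall j, [/\ lin (om A j), lin (ea A j) & lin (fa A j)].

Section Phi.
Context {X X' : finType} (sg : X' -> X) (eps : seq bool) (i : nat)
  (A : act (S X)) (A' : act (S X')).
Hypothesis Hn : (4 <= size eps)%N.
Hypothesis Hi : (1 <= i <= size eps)%N.
Hypothesis LA : linact A.
Hypothesis LA' : linact A'.
Hypothesis Hom : forall l x', (1 <= l <= (size eps).-1)%N ->
  om A (lsh i l) (bb (sg x')) = gm sg (om A' l (bb x')).
Hypothesis He : forall j x', (1 <= j <= (size eps).-2)%N -> j.+1 != i ->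
  ea A (lsh i j) (bb (sg x')) = gm sg (ea A' j (bb x')) /\
  fa A (lsh i j) (bb (sg x')) = gm sg (fa A' j (bb x')).
Hypothesis Hmid : (2 <= i <= (size eps).-1)%N -> forall x',
  ea A i.-1 (ea A i (bb (sg x'))) - Dcoef eps i *: ea A i (ea A i.-1 (bb (sg x')))
    = gm sg (ea A' i.-1 (bb x')) /\
  fa A i (fa A i.-1 (bb (sg x'))) - (Dcoef eps i)^-1 *: fa A i.-1 (fa A i (bb (sg x')))
    = gm sg (fa A' i.-1 (bb x')).

Lemma phi_intertw :
  (forall l, (1 <= l <= (size eps).-1)%N -> forall v,
     gm sg (om A' l v) = om (phiact eps i A) l (gm sg v)) /\
  (forall j, (1 <= j <= (size eps).-2)%N -> forall v,
     gm sg (ea A' j v) = ea (phiact eps i A) j (gm sg v) /\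
     gm sg (fa A' j v) = fa (phiact eps i A) j (gm sg v)).
Proof.
split.
  move=> l Hl v.
  have -> : om (phiact eps i A) l = om A (lsh i l) by rewrite /= /lsh; case: ifP.
  symmetry; apply: (intertw sg); first by case: (LA (lsh i l)).
    by case: (LA' l).
  by move=> x'; apply: Hom.
move=> j Hj v.
case: (boolP (j.+1 == i)) => ji.
  have mid : (2 <= i <= (size eps).-1)%N by move/eqP: ji; lia.
  have -> : ea (phiact eps i A) j = fun u => ea A i.-1 (ea A i u) - Dcoef eps i *: ea A i (ea A i.-1 u).
    rewrite /= mid (_ : (j <= i.-2)%N = false); last by move/eqP: ji; lia.
    by rewrite (_ : j == i.-1); last by move/eqP: ji; lia.
  have -> : fa (phiact eps i A) j = fun u => fa A i (fa A i.-1 u) - (Dcoef eps i)^-1 *: fa A i.-1 (fa A i u).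
    rewrite /= mid (_ : (j <= i.-2)%N = false); last by move/eqP: ji; lia.
    by rewrite (_ : j == i.-1); last by move/eqP: ji; lia.
  have ej : j = i.-1 by move/eqP: ji; lia.
  subst j; split; symmetry.
    apply: (@intertw _ _ sg (fun u : S X => ea A i.-1 (ea A i u) - Dcoef eps i *: ea A i (ea A i.-1 u)) (ea A' i.-1)).
    - case: (LA i.-1) (LA i) => _ L1 _ [_ L2 _].
      exact: (lin_comb _ _ _ (lin_comp _ _ L1 L2) (lin_comp _ _ L2 L1)).
    - by case: (LA' i.-1).
    - by move=> x'; case: (Hmid mid x').
  apply: (@intertw _ _ sg (fun u : S X => fa A i (fa A i.-1 u) - (Dcoef eps i)^-1 *: fa A i.-1 (fa A i u)) (fa A' i.-1)).
  - case: (LA i.-1) (LA i) => _ _ L1 [_ _ L2].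
    exact: (lin_comb _ _ _ (lin_comp _ _ L2 L1) (lin_comp _ _ L1 L2)).
  - by case: (LA' i.-1).
  - by move=> x'; case: (Hmid mid x').
have -> : ea (phiact eps i A) j = ea A (lsh i j).
  rewrite /= /lsh; case: ifP => m1.
    case: ifP => m2; first by rewrite ifT //; lia.
    case: ifP => m3; first by move: ji; lia.
    by rewrite ifF //; lia.
  case: ifP => m2; first by rewrite ifT //; lia.
  by rewrite ifF //; lia.
have -> : fa (phiact eps i A) j = fa A (lsh i j).
  rewrite /= /lsh; case: ifP => m1.
    case: ifP => m2; first by rewrite ifT //; lia.
    case: ifP => m3; first by move: ji; lia.
    by rewrite ifF //; lia.
  case: ifP => m2; first by rewrite ifT //; lia.
  by rewrite ifF //; lia.
split; symmetry; apply: (intertw sg).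
- by case: (LA (lsh i j)).
- by case: (LA' j).
- by move=> x'; case: (He j x' Hj ji).
- by case: (LA (lsh i j)).
- by case: (LA' j).
- by move=> x'; case: (He j x' Hj ji).
Qed.
End Phi.
Lemma iso_from {X X' : finType} (sg : X' -> X) (sg_inj : injective sg) (eps : seq bool) (i : nat)
  (A : act (S X)) (A' : act (S X')) (cnt : nat -> X -> nat) (k' : nat) :
  (1 <= i <= size eps)%N -> linact A ->
  (forall j x, om A j (bb x) = qj eps j ^+ cnt j x *: bb x) ->
  (forall x', cnt i (sg x') = 0%N) ->
  (forall x, cnt i x = 0%N -> exists x', sg x' = x) ->
  (forall l, (1 <= l <= k')%N -> forall v, gm sg (om A' l v) = om (phiact eps i A) l (gm sg v)) ->
  (forall j, (1 <= j <= k'.-1)%N -> forall v,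
     gm sg (ea A' j v) = ea (phiact eps i A) j (gm sg v) /\
     gm sg (fa A' j v) = fa (phiact eps i A) j (gm sg v)) ->
  iso_to k' A' (phiact eps i A) (inTr eps i A).
Proof.
move=> Hi LA Hom H1 H2 Hl Hj.
have Lom : forall j, lin (om A j) by move=> j; case: (LA j).
exists (gm sg); split; first exact: gm_inj.
split; first by move=> v; apply: (inTr_gm sg eps i A cnt Lom Hom H1).
split; first by move=> u; apply: (inTr_surj sg sg_inj eps i A cnt Hi Lom Hom H2).
split; first by move=> l Hl' v; exact: Hl.
by move=> j Hj' v; exact: Hj.
Qed.

Lemma iso_stable {T T' : lmodType F} (A' : act T') (A : act T) P k' :
  iso_to k' A' A P -> stable k' A P.
Proof.
move=> [g [_ [gP [gS [gom gef]]]]] u /gS [v <-]; split.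
  by move=> l Hl; rewrite -gom.
by move=> j Hj; have [<- <-] := gef j Hj v.
Qed.

Lemma linact_nat e : linact (natrep e).
Proof. by move=> j; split; apply: lin_actG. Qed.

Lemma linact_tens e l : linact (tensrep e l).
Proof. by move=> j; split; apply: lin_actG. Qed.

Lemma actN_bb k (g : 'I_k -> natv k) m : actN g (bb m) = g m.
Proof. exact: (actG_bb g m). Qed.
Lemma actT_bb k l (g : tidx k l -> tens k l) J : actT g (bb J) = g J.
Proof. exact: (actG_bb g J). Qed.

Lemma actN0 k (g : 'I_k -> natv k) : actN g 0 = 0.
Proof. exact: (lin0 _ (lin_actG g)). Qed.
Lemma actT0 k l (g : tidx k l -> tens k l) : actT g 0 = 0.
Proof. exact: (lin0 _ (lin_actG g)). Qed.

Section NatInst.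
Variables (eps : seq bool) (i : nat).
Hypothesis Hn : (4 <= size eps)%N.
Hypothesis Hi : (1 <= i <= size eps)%N.
Local Notation eps' := (take i.-1 eps ++ drop i eps).
Local Notation s := (s eps i Hn Hi).

Lemma natrep_om j (m : 'I_(size eps)) : om (natrep eps) j (bb m) = qj eps j ^+ (m.+1 == j) *: bb m.
Proof. by rewrite /= actN_bb /omega1; case: eqP. Qed.

Lemma iso_nat : iso_to (size eps') (natrep eps') (phiact eps i (natrep eps)) (inTr eps i (natrep eps)).
Proof.
have Hk := size_eps' eps i Hn Hi.
have sinj := s_inj eps i Hn Hi.
have Hom' : forall l a, (1 <= l <= (size eps).-1)%N ->
    om (natrep eps) (lsh i l) (bb (s a)) = gm s (om (natrep eps') l (bb a)).
  by move=> l a _; rewrite /= !actN_bb linearZ /= gm_bb omega1_s.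
have He' : forall j a, (1 <= j <= (size eps).-2)%N -> j.+1 != i ->
    ea (natrep eps) (lsh i j) (bb (s a)) = gm s (ea (natrep eps') j (bb a)) /\
    fa (natrep eps) (lsh i j) (bb (s a)) = gm s (fa (natrep eps') j (bb a)).
  move=> j a Hj ji; rewrite /= !actN_bb e1_s // f1_s //; last by rewrite Hk; lia.
  split; [case: (e1 eps' j a) => [m|] /=|case: (f1 eps' j a) => [m|] /=];
    by rewrite ?gm_bb ?linear0.
have Hmid' : (2 <= i <= (size eps).-1)%N -> forall a,
  ea (natrep eps) i.-1 (ea (natrep eps) i (bb (s a))) - Dcoef eps i *: ea (natrep eps) i (ea (natrep eps) i.-1 (bb (s a)))
    = gm s (ea (natrep eps') i.-1 (bb a)) /\
  fa (natrep eps) i (fa (natrep eps) i.-1 (bb (s a))) - (Dcoef eps i)^-1 *: fa (natrep eps) i.-1 (fa (natrep eps) i (bb (s a)))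
    = gm s (fa (natrep eps') i.-1 (bb a)).
  have Ze : forall j, ea (natrep eps) j 0 = 0 by move=> j; exact: actN0.
  have Zf : forall j, fa (natrep eps) j 0 = 0 by move=> j; exact: actN0.
  move=> mid a; split.
    rewrite [ea _ i.-1 (bb _)]/= actN_bb L1 // Ze scaler0 subr0.
    case: (eqVneq (a : nat) i.-1) => ai.
      have [E1 E2 E3] := L3 eps i Hn Hi mid a ai.
      by rewrite /= !actN_bb E1 actN_bb E3 E2 gm_bb.
    have [E1 E2] := L2 eps i Hn Hi mid a ai.
    by rewrite /= !actN_bb E1 E2 actN0 linear0.
  rewrite [fa _ i (bb _)]/= actN_bb F1 // Zf scaler0 subr0.
  case: (eqVneq (a : nat) i.-2) => ai.
    have [E1 E2 E3] := F3 eps i Hn Hi mid a ai.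
    by rewrite /= !actN_bb E1 actN_bb E3 E2 gm_bb.
  have [E1 E2] := F2 eps i Hn Hi mid a ai.
  by rewrite /= !actN_bb E1 E2 actN0 linear0.
have [Hl Hj] := phi_intertw s eps i (natrep eps) (natrep eps') Hn Hi (linact_nat _) (linact_nat _) Hom' He' Hmid'.
apply: (iso_from s sinj eps i _ _ (fun j (m : 'I_(size eps)) => nat_of_bool (m.+1 == j))) => //.
- exact: linact_nat.
- exact: natrep_om.
- move=> a /=; rewrite /snat; apply/eqP; rewrite eqb0; apply/eqP; case: ifP => ?; lia.
- by move=> m /= /eqP; rewrite eqb0 => /s_surj; apply.
- by move=> l Hl'; apply: Hl; lia.
- by move=> j Hj'; apply: Hj; lia.
Qed.
End NatInst.
Lemma gm0 {X X' : finType} (sg : X' -> X) : gm sg 0 = 0.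
Proof. exact: (linear0 (gm sg)). Qed.

Lemma tens_ea_single e l j (K : tidx (size e) l) p :
  (forall r, r != p -> e1 e j (K r) = None) ->
  ea (tensrep e l) j (bb K) = (\prod_(r < l | (r < p)%N) k1 e j (K r))^-1 *:
     (if e1 e j (K p) is Some m then bb (upd K p m) else 0).
Proof.
move=> H; rewrite /= actT_bb (bigD1 (F := fun p0 => (\prod_(r < l | (r < p0)%N) k1 e j (K r))^-1 *:
  (if e1 e j (K p0) is Some m then bb (upd K p0 m) else 0)) p) //= [X in _ + X]big1 ?addr0 // => r rp.
by rewrite H // scaler0.
Qed.

Lemma tens_fa_single e l j (K : tidx (size e) l) p :
  (forall r, r != p -> f1 e j (K r) = None) ->
  fa (tensrep e l) j (bb K) = (\prod_(r < l | (p < r)%N) k1 e j (K r)) *: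
     (if f1 e j (K p) is Some m then bb (upd K p m) else 0).
Proof.
move=> H; rewrite /= actT_bb (bigD1 (F := fun p0 => (\prod_(r < l | (p0 < r)%N) k1 e j (K r)) *:
  (if f1 e j (K p0) is Some m then bb (upd K p0 m) else 0)) p) //= [X in _ + X]big1 ?addr0 // => r rp.
by rewrite H // scaler0.
Qed.

Section TensInst.
Variables (eps : seq bool) (i l : nat).
Hypothesis Hn : (4 <= size eps)%N.
Hypothesis Hi : (1 <= i <= size eps)%N.
Local Notation eps' := (take i.-1 eps ++ drop i eps).
Local Notation s := (s eps i Hn Hi).
Local Notation k := (size eps).
Local Notation k' := (size eps').

Definition sg (J : tidx k' l) : tidx k l := [ffun p => s (J p)].

Lemma sgE J p : sg J p = s (J p). Proof. by rewrite ffunE. Qed.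

Lemma sg_inj : injective sg.
Proof.
move=> J1 J2 E; apply/ffunP => p; apply: (s_inj eps i Hn Hi).
by rewrite -!sgE E.
Qed.

Lemma updE (J : tidx k' l) p m : upd (sg J) p (s m) = sg (upd J p m).
Proof. by apply/ffunP => r; rewrite !ffunE; case: eqP. Qed.

Lemma upd2 {a b} (J : tidx a b) p m1 m2 : upd (upd J p m1) p m2 = upd J p m2.
Proof. by apply/ffunP => r; rewrite !ffunE; case: eqP. Qed.

Lemma updp {a b} (J : tidx a b) p m : upd J p m p = m.
Proof. by rewrite ffunE eqxx. Qed.

Lemma updr {a b} (J : tidx a b) p m r : r != p -> upd J p m r = J r.
Proof. by move=> /negbTE rp; rewrite ffunE rp. Qed.

Definition cntT (j : nat) (J : tidx k l) : nat := #|[pred p | (J p).+1 == j]|.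

Lemma tens_om j J : om (tensrep eps l) j (bb J) = qj eps j ^+ cntT j J *: bb J.
Proof.
rewrite /= actT_bb; congr (_ *: _).
rewrite /cntT -prodr_const [RHS]big_mkcond /=; apply: eq_bigr => p _.
by rewrite /omega1 inE; case: eqP.
Qed.

Lemma iso_tens : iso_to k' (tensrep eps' l) (phiact eps i (tensrep eps l)) (inTr eps i (tensrep eps l)).
Proof.
have Hk := size_eps' eps i Hn Hi.
have Ze : forall j, ea (tensrep eps l) j 0 = 0 by move=> j; exact: actT0.
have Zf : forall j, fa (tensrep eps l) j 0 = 0 by move=> j; exact: actT0.
have Hom' : forall l0 J, (1 <= l0 <= (size eps).-1)%N ->
    om (tensrep eps l) (lsh i l0) (bb (sg J)) = gm sg (om (tensrep eps' l) l0 (bb J)).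
  move=> l0 J _; rewrite /= !actT_bb linearZ /= gm_bb; congr (_ *: _).
  by apply: eq_bigr => p _; rewrite sgE omega1_s.
have He' : forall j J, (1 <= j <= (size eps).-2)%N -> j.+1 != i ->
    ea (tensrep eps l) (lsh i j) (bb (sg J)) = gm sg (ea (tensrep eps' l) j (bb J)) /\
    fa (tensrep eps l) (lsh i j) (bb (sg J)) = gm sg (fa (tensrep eps' l) j (bb J)).
  move=> j J Hj ji; rewrite /= !actT_bb !linear_sum; split; apply: eq_bigr => p _;
    rewrite linearZ /=; congr (_ *: _).
  - by congr (_^-1); apply: eq_bigr => r _; rewrite sgE k1_s.
  - rewrite sgE e1_s //; case: (e1 eps' j (J p)) => [m|] /=.
      by rewrite gm_bb updE.
    by rewrite linear0.
  - by apply: eq_bigr => r _; rewrite sgE k1_s.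
  - rewrite sgE f1_s //; last by lia.
    case: (f1 eps' j (J p)) => [m|] /=.
      by rewrite gm_bb updE.
    by rewrite linear0.
have Hmid' : (2 <= i <= (size eps).-1)%N -> forall J,
  ea (tensrep eps l) i.-1 (ea (tensrep eps l) i (bb (sg J))) - Dcoef eps i *: ea (tensrep eps l) i (ea (tensrep eps l) i.-1 (bb (sg J)))
    = gm sg (ea (tensrep eps' l) i.-1 (bb J)) /\
  fa (tensrep eps l) i (fa (tensrep eps l) i.-1 (bb (sg J))) - (Dcoef eps i)^-1 *: fa (tensrep eps l) i.-1 (fa (tensrep eps l) i (bb (sg J)))
    = gm sg (fa (tensrep eps' l) i.-1 (bb J)).
  move=> mid J.
  have LE : forall j, lin (ea (tensrep eps l) j) by move=> j; case: (linact_tens eps l j) => _ H _; exact: H.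
  have LF : forall j, lin (fa (tensrep eps l) j) by move=> j; case: (linact_tens eps l j) => _ _ H; exact: H.
  split.
    have -> : ea (tensrep eps l) i.-1 (bb (sg J)) = 0.
      by rewrite /= actT_bb big1 // => p _; rewrite sgE L1 // scaler0.
    rewrite Ze scaler0 subr0.
    rewrite [ea _ i (bb _)]/= actT_bb [ea (tensrep eps' l) _ _]/= actT_bb.
    rewrite (lin_sum _ _ _ _ (LE i.-1)) linear_sum.
    apply: eq_bigr => p _; rewrite linearZ [X in _ = _ *: X]/=.
    case: (eqVneq (J p : nat) i.-1) => ai; last first.
      have [E1 E2] := L2 eps i Hn Hi mid (J p) ai.
      by rewrite sgE E1 E2 /= actT0 gm0 !scaler0.
    have [E1 E2 E3] := L3 eps i Hn Hi mid (J p) ai.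
    rewrite sgE E1 E2 (tens_ea_single eps l i.-1 _ p); last first.
      by move=> r rp; rewrite updr // sgE L1.
    rewrite updp E3 upd2 gm_bb -updE scalerA; congr (_ *: _).
    rewrite -invfM -big_split /=; congr (_^-1); apply: eq_bigr => r rp.
    rewrite k1_s_mid // updr ?sgE //; apply/eqP => E; by rewrite E ltnn in rp.
  have -> : fa (tensrep eps l) i (bb (sg J)) = 0.
    by rewrite /= actT_bb big1 // => p _; rewrite sgE F1 // scaler0.
  rewrite Zf scaler0 subr0.
  rewrite [fa _ i.-1 (bb _)]/= actT_bb [fa (tensrep eps' l) _ _]/= actT_bb.
  rewrite (lin_sum _ _ _ _ (LF i)) linear_sum.
  apply: eq_bigr => p _; rewrite linearZ [X in _ = _ *: X]/=.
  case: (eqVneq (J p : nat) i.-2) => ai; last first.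
    have [E1 E2] := F2 eps i Hn Hi mid (J p) ai.
    by rewrite sgE E1 E2 /= actT0 gm0 !scaler0.
  have [E1 E2 E3] := F3 eps i Hn Hi mid (J p) ai.
  rewrite sgE E1 E2 (tens_fa_single eps l i _ p); last first.
    by move=> r rp; rewrite updr // sgE F1.
  rewrite updp E3 upd2 gm_bb -updE scalerA; congr (_ *: _).
  rewrite mulrC -big_split /=; apply: eq_bigr => r rp.
  rewrite k1_s_mid // updr ?sgE //; apply/eqP => E; by rewrite E ltnn in rp.
have [Hl Hj] := phi_intertw sg eps i (tensrep eps l) (tensrep eps' l) Hn Hi (linact_tens _ _) (linact_tens _ _) Hom' He' Hmid'.
apply: (iso_from sg sg_inj eps i _ _ cntT) => //.
- exact: linact_tens.
- exact: tens_om.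
- move=> J; rewrite /cntT; apply: eq_card0 => p; rewrite !inE sgE /= /snat.
  apply/negbTE; case: ifP => ?; apply/eqP; lia.
- move=> J /card0_eq H.
  have : forall p, exists a, s a = J p.
    move=> p; apply: s_surj; have := H p; rewrite !inE => /negbT; by [].
  case/fin_all_exists => f Hf; exists [ffun p => f p]; apply/ffunP => p.
  by rewrite sgE ffunE Hf.
- by move=> l0 Hl'; apply: Hl; lia.
- by move=> j Hj'; apply: Hj; lia.
Qed.
End TensInst.

Theorem lemma4p4 (eps : seq bool) (i : nat) :
  let n := size eps in
  let eps' := take i.-1 eps ++ drop i eps in
  (4 <= n)%N -> (1 <= i <= n)%N ->
  (n = 4%N -> constant eps') ->
  (* (1) *)
  (stable (size eps') (phiact eps i (natrep eps)) (inTr eps i (natrep eps)) /\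
   iso_to (size eps') (natrep eps') (phiact eps i (natrep eps)) (inTr eps i (natrep eps))) /\
  (* (2) *)
  (forall l : nat, (1 <= l)%N ->
     iso_to (size eps') (tensrep eps' l) (phiact eps i (tensrep eps l))
            (inTr eps i (tensrep eps l))).
Proof.
move=> n eps' Hn Hi _.
have Hiso := iso_nat eps i Hn Hi.
split; first by split; [apply: iso_stable Hiso | exact: Hiso].
by move=> l _; exact: (iso_tens eps i l Hn Hi).
Qed.
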